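(* Let $A,B,C,D$ be smooth real functions on an open subset of $\mathbb R^4$ with coordinates $(x_0,x_1,x_2,x_3)$, $\partial_i=\partial/\partial x_i$, and let $h$ be the $H$-valued map $h=\begin{pmatrix}1&A&B&D\\0&1&A&C\\0&0&1&A\\0&0&0&1\end{pmatrix}$. Let $(V_0,V_1,V_2,V_3)$ be the framing dual to the coframing $h\,\mathrm dx$, explicitly $$V_0=\partial_0,\quad V_1=\partial_1-A\partial_0,\quad V_2=\partial_2-A\partial_1-(B-A^2)\partial_0,$$ $$V_3=\partial_3-A\partial_2-(C-A^2)\partial_1-(D-(C+B)A+A^3)\partial_0.$$ Then the $\mathrm{GL}(2)$-structure containing the coframing $h\,\mathrm dx$ is torsion-free if and only if $$\begin{aligned} &V_2(D)-V_3(B)-AV_2(B)-CV_2(A)+AV_3(A)+A^2V_2(A)=0,\\ &2V_1(D)-V_2(C)-2AV_1(B)-V_3(A)+AV_2(A)+2A^2V_1(A)-2CV_1(A)=0,\\ &V_0(D)-2V_1(C)+3V_1(B)-AV_0(B)-2V_2(A)-AV_1(A)-CV_0(A)+A^2V_0(A)=0,\\ &V_0(C)-2V_0(B)+V_1(A)+AV_0(A)=0. \end{aligned}$$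
   Context: $\mathcal V_3$ is the space of real binary cubic forms in $x,y$ with the linear-substitution action of $\mathrm{GL}(2,\mathbb R)$; $G_3\subset\mathrm{GL}(\mathcal V_3)$ is its image, and $\mathcal V_3\cong\mathbb R^4$ via $x^{3-i}y^i\mapsto e_{i+1}$. A $\mathrm{GL}(2)$-structure is a $G_3$-structure (reduction of the coframe bundle, coframes valued in $\mathbb R^4$, to $G_3$); the $\mathrm{GL}(2)$-structure containing a coframing $\eta$ is the one whose fibre at each point is the $G_3$-orbit of $\eta$. It is torsion-free if there is a principal $G_3$-connection $\theta$ with $\mathrm d\omega=-\theta\wedge\omega$ for the tautological form $\omega$. *)

(* Defs.v *)
From Stdlib Require Import Reals Lra Lia ClassicalEpsilon List.
Import ListNotations.
Open Scope R_scope.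

Definition pt : Type := (R * R * R * R)%type.

Definition coord (p : pt) (i : nat) : R :=
  match p with (x0, x1, x2, x3) =>
    match i with 0%nat => x0 | 1%nat => x1 | 2%nat => x2 | _ => x3 end end.

Definition upd (p : pt) (i : nat) (t : R) : pt :=
  match p with (x0, x1, x2, x3) =>
    match i with
    | 0%nat => (t, x1, x2, x3)
    | 1%nat => (x0, t, x2, x3)
    | 2%nat => (x0, x1, t, x3)
    | _ => (x0, x1, x2, t) end end.

Definition near (q p : pt) (eps : R) : Prop :=
  forall i, (i < 4)%nat -> Rabs (coord q i - coord p i) < eps.

Definition is_open (U : pt -> Prop) : Prop :=
  forall p, U p -> exists eps, 0 < eps /\ forall q, near q p eps -> U q.

Definition cont_on (U : pt -> Prop) (f : pt -> R) : Prop :=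
  forall p, U p -> forall e, 0 < e ->
    exists d, 0 < d /\ forall q, U q -> near q p d -> Rabs (f q - f p) < e.

(** Smooth (C^infinity) on U: there is a family F of functions, indexed by
    lists of coordinate directions, with F [] = f on U, F (i :: l) the i-th
    partial derivative of F l on U, and all F l continuous on U. *)
Definition smooth_on (U : pt -> Prop) (f : pt -> R) : Prop :=
  exists F : list nat -> pt -> R,
    (forall p, U p -> F nil p = f p) /\
    (forall l i p, (i < 4)%nat -> U p ->
        derivable_pt_lim (fun t => F l (upd p i t)) (coord p i) (F (i :: l) p)) /\
    (forall l, cont_on U (F l)).

(** Partial derivative d f / d x_i at p (the value of the derivative when it
    exists; chosen by classical description, unique by uniqueness of limits). *)
Definition pd (i : nat) (f : pt -> R) (p : pt) : R :=
  epsilon (inhabits 0) (fun l => derivable_pt_lim (fun t => f (upd p i t)) (coord p i) l).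

Definition sum4 (f : nat -> R) : R := f 0%nat + f 1%nat + f 2%nat + f 3%nat.

(** The matrix h (entries h a b, rows a, columns b, 0-indexed). *)
Definition hmat (A B C D : pt -> R) (a b : nat) (p : pt) : R :=
  match a, b with
  | 0%nat, 0%nat => 1 | 0%nat, 1%nat => A p | 0%nat, 2%nat => B p | 0%nat, 3%nat => D p
  | 1%nat, 1%nat => 1 | 1%nat, 2%nat => A p | 1%nat, 3%nat => C p
  | 2%nat, 2%nat => 1 | 2%nat, 3%nat => A p
  | 3%nat, 3%nat => 1
  | _, _ => 0 end.

(** Basis of the Lie algebra g_3 of G_3 in gl(V_3) = gl(4,R), w.r.t. the basis
    e_{i+1} = x^{3-i} y^i; these are the derivations y d/dx, x d/dy, x d/dx,
    y d/dy (the infinitesimal linear substitutions).  Entry (a,b) is the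
    e_{a+1}-coefficient of the image of e_{b+1}. *)
Definition g3basis (k a b : nat) : R :=
  match k with
  | 0%nat =>
      match a, b with 1%nat, 0%nat => 3 | 2%nat, 1%nat => 2 | 3%nat, 2%nat => 1 | _, _ => 0 end
  | 1%nat =>
      match a, b with 0%nat, 1%nat => 1 | 1%nat, 2%nat => 2 | 2%nat, 3%nat => 3 | _, _ => 0 end
  | 2%nat =>
      match a, b with 0%nat, 0%nat => 3 | 1%nat, 1%nat => 2 | 2%nat, 2%nat => 1 | _, _ => 0 end
  | _ =>
      match a, b with 1%nat, 1%nat => 1 | 2%nat, 2%nat => 2 | 3%nat, 3%nat => 3 | _, _ => 0 end
  end.

(** The GL(2)-structure containing the coframing eta^a = sum_b h a b dx^b on U
    is torsion-free: there is a smooth g_3-valued 1-form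
    theta = sum_{k,c} t k c (x) g3basis k dx^c on U with
    d eta = - theta /\ eta. *)
Definition torsion_free (U : pt -> Prop) (h : nat -> nat -> pt -> R) : Prop :=
  exists t : nat -> nat -> pt -> R,
    (forall k c, (k < 4)%nat -> (c < 4)%nat -> smooth_on U (t k c)) /\
    let theta a b c p := sum4 (fun k => t k c p * g3basis k a b) in
    forall p, U p -> forall a c d, (a < 4)%nat -> (c < d)%nat -> (d < 4)%nat ->
      pd c (h a d) p - pd d (h a c) p =
      - sum4 (fun b => theta a b c p * h b d p - theta a b d p * h b c p).

Definition Vf (A B C D : pt -> R) (j : nat) (f : pt -> R) (p : pt) : R :=
  match j with
  | 0%nat => pd 0 f p
  | 1%nat => pd 1 f p - A p * pd 0 f p
  | 2%nat => pd 2 f p - A p * pd 1 f p - (B p - A p ^ 2) * pd 0 f p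
  | _ => pd 3 f p - A p * pd 2 f p - (C p - A p ^ 2) * pd 1 f p
          - (D p - (C p + B p) * A p + A p ^ 3) * pd 0 f p
  end.

(* Main.v *)
Require Import Defs.
From Stdlib Require Import Reals Lra Lia ClassicalEpsilon List.
Import ListNotations.
Open Scope R_scope.

Lemma upd_coord p i : upd p i (coord p i) = p.
Proof. destruct p as [[[x0 x1] x2] x3]; destruct i as [|[|[|[|i]]]]; reflexivity. Qed.

Lemma coord_upd p i t : (i < 4)%nat -> coord (upd p i t) i = t.
Proof. intro. destruct p as [[[x0 x1] x2] x3]; destruct i as [|[|[|[|i]]]]; try reflexivity; lia. Qed.

Lemma near_upd p i t eps : (i < 4)%nat -> 0 < eps -> Rabs (t - coord p i) < eps ->
  near (upd p i t) p eps.
Proof.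
  intros Hi He Ht j Hj. destruct p as [[[x0 x1] x2] x3].
  destruct i as [|[|[|[|i]]]]; try lia;
  destruct j as [|[|[|[|j]]]]; try lia; simpl in *;
  try (unfold Rminus; rewrite Rplus_opp_r, Rabs_R0; exact He); exact Ht.
Qed.

Lemma pd_eq i f p l :
  derivable_pt_lim (fun t => f (upd p i t)) (coord p i) l -> pd i f p = l.
Proof.
  intro H. unfold pd.
  pose proof (epsilon_spec (inhabits 0)
    (fun l => derivable_pt_lim (fun t => f (upd p i t)) (coord p i) l) (ex_intro _ l H)) as H2.
  exact (uniqueness_limite _ _ _ _ H2 H).
Qed.

Lemma pd_const i k p : pd i (fun _ => k) p = 0.
Proof. apply pd_eq. apply derivable_pt_lim_const. Qed.

Lemma derivable_local (f g : R -> R) x l d :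
  0 < d -> (forall y, Rabs (y - x) < d -> f y = g y) ->
  derivable_pt_lim f x l -> derivable_pt_lim g x l.
Proof.
  intros Hd Hfg H eps Heps.
  destruct (H eps Heps) as [del Hdel].
  assert (Hm : 0 < Rmin del d) by (apply Rmin_pos; [apply cond_pos | exact Hd]).
  exists (mkposreal _ Hm). intros h Hh Hlt. simpl in Hlt.
  rewrite <- (Hfg (x + h)), <- (Hfg x).
  - apply Hdel; auto. apply Rlt_le_trans with (1 := Hlt). apply Rmin_l.
  - unfold Rminus; rewrite Rplus_opp_r, Rabs_R0; exact Hd.
  - replace (x + h - x) with h by ring. apply Rlt_le_trans with (1 := Hlt). apply Rmin_r.
Qed.

Lemma pd_family U f F i p :
  is_open U -> (i < 4)%nat -> U p ->
  (forall q, U q -> F nil q = f q) ->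
  derivable_pt_lim (fun t => F nil (upd p i t)) (coord p i) (F [i] p) ->
  pd i f p = F [i] p.
Proof.
  intros HU Hi Hp H0 Hd. apply pd_eq.
  destruct (HU p Hp) as [eps [He Hn]].
  apply (derivable_local (fun t => F nil (upd p i t)) _ _ _ eps He); auto.
  intros y Hy. apply H0, Hn, near_upd; auto.
Qed.

Lemma cont_const U k : cont_on U (fun _ => k).
Proof. intros p _ e He. exists 1; split; [lra|]. intros. unfold Rminus; rewrite Rplus_opp_r, Rabs_R0; lra. Qed.

Lemma near_mono q p d1 d2 : d1 <= d2 -> near q p d1 -> near q p d2.
Proof. intros Hd H i Hi. specialize (H i Hi). lra. Qed.

Lemma cont_add U f g : cont_on U f -> cont_on U g -> cont_on U (fun p => f p + g p).
Proof.
  intros Hf Hg p Hp e He.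
  destruct (Hf p Hp (e/2)) as [d1 [Hd1 H1]]; [lra|].
  destruct (Hg p Hp (e/2)) as [d2 [Hd2 H2]]; [lra|].
  exists (Rmin d1 d2); split; [apply Rmin_pos; auto|].
  intros q Hq Hn.
  specialize (H1 q Hq (near_mono _ _ _ _ (Rmin_l _ _) Hn)).
  specialize (H2 q Hq (near_mono _ _ _ _ (Rmin_r _ _) Hn)).
  replace (f q + g q - (f p + g p)) with ((f q - f p) + (g q - g p)) by ring.
  eapply Rle_lt_trans; [apply Rabs_triang|]. lra.
Qed.

Lemma cont_mul U f g : cont_on U f -> cont_on U g -> cont_on U (fun p => f p * g p).
Proof.
  intros Hf Hg p Hp e He.
  set (K := 1 + Rabs (f p) + Rabs (g p)).
  assert (HK : 1 <= K) by (unfold K; pose proof (Rabs_pos (f p)); pose proof (Rabs_pos (g p)); lra).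
  set (e' := Rmin 1 (e / K)).
  assert (He' : 0 < e') by (apply Rmin_pos; [lra| apply Rdiv_lt_0_compat; lra]).
  assert (He'1 : e' <= 1) by apply Rmin_l.
  assert (He'2 : e' * K <= e).
  { unfold e'. apply Rle_trans with ((e / K) * K).
    apply Rmult_le_compat_r; [lra| apply Rmin_r]. field_simplify; lra. }
  destruct (Hf p Hp e') as [d1 [Hd1 H1]]; [lra|].
  destruct (Hg p Hp e') as [d2 [Hd2 H2]]; [lra|].
  exists (Rmin d1 d2); split; [apply Rmin_pos; auto|].
  intros q Hq Hn.
  specialize (H1 q Hq (near_mono _ _ _ _ (Rmin_l _ _) Hn)).
  specialize (H2 q Hq (near_mono _ _ _ _ (Rmin_r _ _) Hn)).
  replace (f q * g q - f p * g p) with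
    ((f q - f p) * (g q - g p) + (f q - f p) * g p + f p * (g q - g p)) by ring.
  eapply Rle_lt_trans; [apply Rabs_triang|].
  eapply Rle_lt_trans; [apply Rplus_le_compat_r, Rabs_triang|].
  rewrite !Rabs_mult.
  pose proof (Rabs_pos (f q - f p)); pose proof (Rabs_pos (g q - g p)).
  pose proof (Rabs_pos (f p)); pose proof (Rabs_pos (g p)).
  assert (Rabs (f q - f p) * Rabs (g q - g p) <= e' * 1).
  { apply Rmult_le_compat; lra. }
  assert (Rabs (f q - f p) * Rabs (g p) <= e' * Rabs (g p)).
  { apply Rmult_le_compat_r; lra. }
  assert (Rabs (f p) * Rabs (g q - g p) < Rabs (f p) * e' + e').
  { assert (Rabs (f p) * Rabs (g q - g p) <= Rabs (f p) * e') by (apply Rmult_le_compat_l; lra). lra. }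
  unfold K in He'2. nra.
Qed.

Lemma smooth_const U k : smooth_on U (fun _ => k).
Proof.
  exists (fun l => match l with nil => fun _ => k | _ => fun _ => 0 end).
  split; [reflexivity|]. split.
  - intros l i p _ _. destruct l; apply derivable_pt_lim_const.
  - intros l. destruct l; apply cont_const.
Qed.

Lemma smooth_add U f g : smooth_on U f -> smooth_on U g -> smooth_on U (fun p => f p + g p).
Proof.
  intros [F1 [H1a [H1b H1c]]] [F2 [H2a [H2b H2c]]].
  exists (fun l p => F1 l p + F2 l p). split; [intros; rewrite H1a, H2a; auto|]. split.
  - intros l i p Hi Hp. apply (derivable_pt_lim_plus (fun t => F1 l (upd p i t)) (fun t => F2 l (upd p i t))); auto.
  - intros l. apply cont_add; auto.
Qed.

Lemma smooth_opp U f : smooth_on U f -> smooth_on U (fun p => - f p).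
Proof.
  intros [F1 [H1a [H1b H1c]]].
  exists (fun l p => - F1 l p). split; [intros; rewrite H1a; auto|]. split.
  - intros l i p Hi Hp. apply (derivable_pt_lim_opp (fun t => F1 l (upd p i t))); auto.
  - intros l. intros p Hp e He. destruct (H1c l p Hp e He) as [d [Hd H]].
    exists d; split; auto. intros q Hq Hn. specialize (H q Hq Hn).
    replace (- F1 l q - - F1 l p) with (- (F1 l q - F1 l p)) by ring. rewrite Rabs_Ropp; auto.
Qed.

Lemma smooth_sub U f g : smooth_on U f -> smooth_on U g -> smooth_on U (fun p => f p - g p).
Proof. intros. apply (smooth_add U f (fun p => - g p)); auto. apply smooth_opp; auto. Qed.

Fixpoint terms (l : list nat) : list (list nat * list nat) :=
  match l with
  | nil => [(nil, nil)]
  | i :: l' => flat_map (fun ab => [(i :: fst ab, snd ab); (fst ab, i :: snd ab)]) (terms l')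
  end.

Definition sumF (F1 F2 : list nat -> pt -> R) (L : list (list nat * list nat)) (p : pt) : R :=
  fold_right (fun ab s => F1 (fst ab) p * F2 (snd ab) p + s) 0 L.

Lemma sumF_app F1 F2 L1 L2 p : sumF F1 F2 (L1 ++ L2) p = sumF F1 F2 L1 p + sumF F1 F2 L2 p.
Proof. induction L1 as [|x L1 IH]; simpl; [ring|]. unfold sumF in *; simpl. rewrite IH; ring. Qed.

Lemma sumF_deriv F1 F2 i p L :
  (forall a, derivable_pt_lim (fun t => F1 a (upd p i t)) (coord p i) (F1 (i :: a) p)) ->
  (forall a, derivable_pt_lim (fun t => F2 a (upd p i t)) (coord p i) (F2 (i :: a) p)) ->
  derivable_pt_lim (fun t => sumF F1 F2 L (upd p i t)) (coord p i)
    (sumF F1 F2 (flat_map (fun ab => [(i :: fst ab, snd ab); (fst ab, i :: snd ab)]) L) p).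
Proof.
  intros H1 H2. induction L as [|[a b] L IH].
  - simpl. apply derivable_pt_lim_const.
  - set (fm := fun ab : list nat * list nat => [(i :: fst ab, snd ab); (fst ab, i :: snd ab)]) in *.
    replace (sumF F1 F2 (flat_map fm ((a, b) :: L)) p) with
      ((F1 (i :: a) p * F2 b p + F1 a p * F2 (i :: b) p) + sumF F1 F2 (flat_map fm L) p)
      by (unfold sumF; simpl; ring).
    change (derivable_pt_lim (fun t => F1 a (upd p i t) * F2 b (upd p i t) + sumF F1 F2 L (upd p i t))
      (coord p i) ((F1 (i :: a) p * F2 b p + F1 a p * F2 (i :: b) p) + sumF F1 F2 (flat_map fm L) p)).
    apply (derivable_pt_lim_plus (fun t => F1 a (upd p i t) * F2 b (upd p i t))
             (fun t => sumF F1 F2 L (upd p i t))); auto.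
    pose proof (derivable_pt_lim_mult (fun t => F1 a (upd p i t)) (fun t => F2 b (upd p i t)) _ _ _ (H1 a) (H2 b)) as HM.
    simpl in HM. rewrite upd_coord in HM. exact HM.
Qed.

Lemma sumF_cont U F1 F2 L : (forall l, cont_on U (F1 l)) -> (forall l, cont_on U (F2 l)) ->
  cont_on U (sumF F1 F2 L).
Proof.
  intros H1 H2. induction L as [|[a b] L IH].
  - apply cont_const.
  - apply (cont_add U (fun p => F1 a p * F2 b p) (sumF F1 F2 L)); auto.
    apply cont_mul; auto.
Qed.

Lemma smooth_mul U f g : smooth_on U f -> smooth_on U g -> smooth_on U (fun p => f p * g p).
Proof.
  intros [F1 [H1a [H1b H1c]]] [F2 [H2a [H2b H2c]]].
  exists (fun l => sumF F1 F2 (terms l)). split.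
  - intros p Hp. unfold sumF; simpl. rewrite H1a, H2a; auto. ring.
  - split.
    + intros l i p Hi Hp. simpl. apply sumF_deriv; intros; auto.
    + intros l. apply sumF_cont; auto.
Qed.

Lemma smooth_pd U f i : is_open U -> (i < 4)%nat -> smooth_on U f -> smooth_on U (pd i f).
Proof.
  intros HU Hi [F [Ha [Hb Hc]]].
  exists (fun l => F (l ++ [i])). split.
  - intros p Hp. simpl. symmetry. apply (pd_family U f F); auto.
  - split.
    + intros l j p Hj Hp. simpl. apply Hb; auto.
    + intros l. apply Hc.
Qed.

Definition hm (A B C D : R) (a b : nat) : R :=
  match a, b with
  | 0%nat, 0%nat => 1 | 0%nat, 1%nat => A | 0%nat, 2%nat => B | 0%nat, 3%nat => D
  | 1%nat, 1%nat => 1 | 1%nat, 2%nat => A | 1%nat, 3%nat => C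
  | 2%nat, 2%nat => 1 | 2%nat, 3%nat => A
  | 3%nat, 3%nat => 1
  | _, _ => 0 end.

Definition dhm (dA dB dC dD : nat -> R) (c a b : nat) : R :=
  match a, b with
  | 0%nat, 1%nat => dA c | 0%nat, 2%nat => dB c | 0%nat, 3%nat => dD c
  | 1%nat, 2%nat => dA c | 1%nat, 3%nat => dC c
  | 2%nat, 3%nat => dA c
  | _, _ => 0 end.

Definition Ep (A B C D : R) (dA dB dC dD : nat -> R) (tv : nat -> nat -> R) (a c d : nat) : R :=
  let theta a b c := sum4 (fun k => tv k c * g3basis k a b) in
  dhm dA dB dC dD c a d - dhm dA dB dC dD d a c +
  sum4 (fun b => theta a b c * hm A B C D b d - theta a b d * hm A B C D b c).

Definition Vv (A B C D : R) (j : nat) (f : nat -> R) : R :=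
  match j with
  | 0%nat => f 0%nat
  | 1%nat => f 1%nat - A * f 0%nat
  | 2%nat => f 2%nat - A * f 1%nat - (B - A ^ 2) * f 0%nat
  | _ => f 3%nat - A * f 2%nat - (C - A ^ 2) * f 1%nat
          - (D - (C + B) * A + A ^ 3) * f 0%nat
  end.

Definition cond1 (A B C D : R) (dA dB dC dD : nat -> R) : R :=
  let V := Vv A B C D in
  V 2%nat dD - V 3%nat dB - A * V 2%nat dB - C * V 2%nat dA + A * V 3%nat dA
       + A ^ 2 * V 2%nat dA.
Definition cond2 (A B C D : R) (dA dB dC dD : nat -> R) : R :=
  let V := Vv A B C D in
     2 * V 1%nat dD - V 2%nat dC - 2 * A * V 1%nat dB - V 3%nat dA + A * V 2%nat dA
       + 2 * A ^ 2 * V 1%nat dA - 2 * C * V 1%nat dA.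
Definition cond3 (A B C D : R) (dA dB dC dD : nat -> R) : R :=
  let V := Vv A B C D in
     V 0%nat dD - 2 * V 1%nat dC + 3 * V 1%nat dB - A * V 0%nat dB - 2 * V 2%nat dA
       - A * V 1%nat dA - C * V 0%nat dA + A ^ 2 * V 0%nat dA.
Definition cond4 (A B C D : R) (dA dB dC dD : nat -> R) : R :=
  let V := Vv A B C D in
     V 0%nat dC - 2 * V 0%nat dB + V 1%nat dA + A * V 0%nat dA.

Definition tf (k c : nat) (A B C D : R) (dA dB dC dD : nat -> R) : R :=
  match k, c with
  | 0%nat, 0%nat => 0
  | 0%nat, 1%nat => 0
  | 0%nat, 2%nat => ((1/9)*(dA 0%nat))
  | 0%nat, 3%nat => ((-2/9)*(dA 0%nat)*A + (1/3)*(dC 0%nat))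
  | 1%nat, 0%nat => ((-1/3)*(dA 0%nat))
  | 1%nat, 1%nat => ((-2/9)*(dA 0%nat)*A + (-1/3)*(dA 1%nat) + (2/9)*(dC 0%nat))
  | 1%nat, 2%nat => ((1/9)*(dA 0%nat)*A*A + (2/3)*(dA 0%nat)*B + (-1/3)*(dA 1%nat)*A + (-1)*(dA 2%nat) + (-1)*(dB 0%nat)*A + 1*(dB 1%nat) + (2/9)*(dC 0%nat)*A)
  | 1%nat, 3%nat => (1*(dA 0%nat)*A*B + (-7/18)*(dA 0%nat)*A*C + (1/6)*(dA 0%nat)*D + (1/6)*(dA 1%nat)*C + (-1)*(dA 2%nat)*A + (-1/2)*(dA 3%nat) + (-1)*(dB 0%nat)*A*A + 1*(dB 1%nat)*A + (1/2)*(dC 0%nat)*A*A + (-1/2)*(dC 0%nat)*B + (2/9)*(dC 0%nat)*C + (-1/2)*(dC 1%nat)*A + (1/2)*(dC 2%nat))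
  | 2%nat, 0%nat => 0
  | 2%nat, 1%nat => ((2/9)*(dA 0%nat))
  | 2%nat, 2%nat => ((-1/9)*(dA 0%nat)*A + (1/6)*(dA 1%nat) + (1/6)*(dC 0%nat))
  | 2%nat, 3%nat => ((-2/3)*(dA 0%nat)*B + (2/9)*(dA 0%nat)*C + (-1/6)*(dA 1%nat)*A + (2/3)*(dA 2%nat) + 1*(dB 0%nat)*A + (-1)*(dB 1%nat) + (-1/2)*(dC 0%nat)*A + (2/3)*(dC 1%nat))
  | 3%nat, 0%nat => 0
  | 3%nat, 1%nat => 0
  | 3%nat, 2%nat => ((-1/9)*(dA 0%nat)*A + (1/9)*(dC 0%nat))
  | _, _ => ((2/9)*(dA 0%nat)*A*A + (4/3)*(dA 0%nat)*B + (-1/3)*(dA 1%nat)*A + (-4/3)*(dA 2%nat) + (-2)*(dB 0%nat)*A + 2*(dB 1%nat) + (4/9)*(dC 0%nat)*A + (-1/3)*(dC 1%nat))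
  end.

Ltac unfold_all := cbv beta iota zeta delta [Ep tf hm dhm sum4 g3basis Vv cond1 cond2 cond3 cond4].

Lemma alg_fwd (A B C D : R) (dA dB dC dD : nat -> R) (tv : nat -> nat -> R) :
  (forall a c d, (a < 4)%nat -> (c < d)%nat -> (d < 4)%nat -> Ep A B C D dA dB dC dD tv a c d = 0) ->
  cond1 A B C D dA dB dC dD = 0 /\ cond2 A B C D dA dB dC dD = 0 /\ cond3 A B C D dA dB dC dD = 0 /\ cond4 A B C D dA dB dC dD = 0.
Proof.
  intro H.
  pose proof (H 0%nat 0%nat 1%nat ltac:(lia) ltac:(lia) ltac:(lia)) as H001.
  pose proof (H 0%nat 0%nat 2%nat ltac:(lia) ltac:(lia) ltac:(lia)) as H002.
  pose proof (H 0%nat 0%nat 3%nat ltac:(lia) ltac:(lia) ltac:(lia)) as H003.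
  pose proof (H 0%nat 1%nat 2%nat ltac:(lia) ltac:(lia) ltac:(lia)) as H012.
  pose proof (H 0%nat 1%nat 3%nat ltac:(lia) ltac:(lia) ltac:(lia)) as H013.
  pose proof (H 0%nat 2%nat 3%nat ltac:(lia) ltac:(lia) ltac:(lia)) as H023.
  pose proof (H 1%nat 0%nat 1%nat ltac:(lia) ltac:(lia) ltac:(lia)) as H101.
  pose proof (H 1%nat 0%nat 2%nat ltac:(lia) ltac:(lia) ltac:(lia)) as H102.
  pose proof (H 1%nat 0%nat 3%nat ltac:(lia) ltac:(lia) ltac:(lia)) as H103.
  pose proof (H 1%nat 1%nat 2%nat ltac:(lia) ltac:(lia) ltac:(lia)) as H112.
  pose proof (H 1%nat 1%nat 3%nat ltac:(lia) ltac:(lia) ltac:(lia)) as H113.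
  pose proof (H 1%nat 2%nat 3%nat ltac:(lia) ltac:(lia) ltac:(lia)) as H123.
  pose proof (H 2%nat 0%nat 1%nat ltac:(lia) ltac:(lia) ltac:(lia)) as H201.
  pose proof (H 2%nat 0%nat 2%nat ltac:(lia) ltac:(lia) ltac:(lia)) as H202.
  pose proof (H 2%nat 0%nat 3%nat ltac:(lia) ltac:(lia) ltac:(lia)) as H203.
  pose proof (H 2%nat 1%nat 2%nat ltac:(lia) ltac:(lia) ltac:(lia)) as H212.
  pose proof (H 2%nat 1%nat 3%nat ltac:(lia) ltac:(lia) ltac:(lia)) as H213.
  pose proof (H 2%nat 2%nat 3%nat ltac:(lia) ltac:(lia) ltac:(lia)) as H223.
  pose proof (H 3%nat 0%nat 1%nat ltac:(lia) ltac:(lia) ltac:(lia)) as H301.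
  pose proof (H 3%nat 0%nat 2%nat ltac:(lia) ltac:(lia) ltac:(lia)) as H302.
  pose proof (H 3%nat 0%nat 3%nat ltac:(lia) ltac:(lia) ltac:(lia)) as H303.
  pose proof (H 3%nat 1%nat 2%nat ltac:(lia) ltac:(lia) ltac:(lia)) as H312.
  pose proof (H 3%nat 1%nat 3%nat ltac:(lia) ltac:(lia) ltac:(lia)) as H313.
  pose proof (H 3%nat 2%nat 3%nat ltac:(lia) ltac:(lia) ltac:(lia)) as H323.
  clear H.
  split; [|split; [|split]].
  - transitivity (((-1)*A*D + 1*B*C) * Ep A B C D dA dB dC dD tv 0%nat 0%nat 1%nat + ((-1)*A*C + 1*D) * Ep A B C D dA dB dC dD tv 0%nat 0%nat 2%nat + (1*A*A + (-1)*B) * Ep A B C D dA dB dC dD tv 0%nat 0%nat 3%nat + (1*C) * Ep A B C D dA dB dC dD tv 0%nat 1%nat 2%nat + ((-1)*A) * Ep A B C D dA dB dC dD tv 0%nat 1%nat 3%nat + (1) * Ep A B C D dA dB dC dD tv 0%nat 2%nat 3%nat).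
    + unfold_all; field.
    + rewrite H001, H002, H003, H012, H013, H023; ring.
  - transitivity (((-2)*A*B + 2*D) * Ep A B C D dA dB dC dD tv 0%nat 0%nat 1%nat + (2*A*A) * Ep A B C D dA dB dC dD tv 0%nat 0%nat 2%nat + ((-2)*A) * Ep A B C D dA dB dC dD tv 0%nat 0%nat 3%nat + ((-2)*A) * Ep A B C D dA dB dC dD tv 0%nat 1%nat 2%nat + (2) * Ep A B C D dA dB dC dD tv 0%nat 1%nat 3%nat + (1*A*D + (-1)*B*C) * Ep A B C D dA dB dC dD tv 1%nat 0%nat 1%nat + (1*A*C + (-1)*D) * Ep A B C D dA dB dC dD tv 1%nat 0%nat 2%nat + ((-1)*A*A + 1*B) * Ep A B C D dA dB dC dD tv 1%nat 0%nat 3%nat + ((-1)*C) * Ep A B C D dA dB dC dD tv 1%nat 1%nat 2%nat + (1*A) * Ep A B C D dA dB dC dD tv 1%nat 1%nat 3%nat + ((-1)) * Ep A B C D dA dB dC dD tv 1%nat 2%nat 3%nat).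
    + unfold_all; field.
    + rewrite H001, H002, H003, H012, H013, H101, H102, H103, H112, H113, H123; ring.
  - transitivity ((1*A*A + 3*B + (-1)*C) * Ep A B C D dA dB dC dD tv 0%nat 0%nat 1%nat + ((-4)*A) * Ep A B C D dA dB dC dD tv 0%nat 0%nat 2%nat + (1) * Ep A B C D dA dB dC dD tv 0%nat 0%nat 3%nat + (3) * Ep A B C D dA dB dC dD tv 0%nat 1%nat 2%nat + (2*A*B + (-2)*D) * Ep A B C D dA dB dC dD tv 1%nat 0%nat 1%nat + ((-2)*A*A) * Ep A B C D dA dB dC dD tv 1%nat 0%nat 2%nat + (2*A) * Ep A B C D dA dB dC dD tv 1%nat 0%nat 3%nat + (2*A) * Ep A B C D dA dB dC dD tv 1%nat 1%nat 2%nat + ((-2)) * Ep A B C D dA dB dC dD tv 1%nat 1%nat 3%nat + ((-1)*A*D + 1*B*C) * Ep A B C D dA dB dC dD tv 2%nat 0%nat 1%nat + ((-1)*A*C + 1*D) * Ep A B C D dA dB dC dD tv 2%nat 0%nat 2%nat + (1*A*A + (-1)*B) * Ep A B C D dA dB dC dD tv 2%nat 0%nat 3%nat + (1*C) * Ep A B C D dA dB dC dD tv 2%nat 1%nat 2%nat + ((-1)*A) * Ep A B C D dA dB dC dD tv 2%nat 1%nat 3%nat + (1) * Ep A B C D dA dB dC dD tv 2%nat 2%nat 3%nat).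
    + unfold_all; field.
    + rewrite H001, H002, H003, H012, H101, H102, H103, H112, H113, H201, H202, H203, H212, H213, H223; ring.
  - transitivity ((2*A) * Ep A B C D dA dB dC dD tv 0%nat 0%nat 1%nat + ((-2)) * Ep A B C D dA dB dC dD tv 0%nat 0%nat 2%nat + (1*A*A + 3*B + (-1)*C) * Ep A B C D dA dB dC dD tv 1%nat 0%nat 1%nat + ((-4)*A) * Ep A B C D dA dB dC dD tv 1%nat 0%nat 2%nat + (1) * Ep A B C D dA dB dC dD tv 1%nat 0%nat 3%nat + (3) * Ep A B C D dA dB dC dD tv 1%nat 1%nat 2%nat + (2*A*B + (-2)*D) * Ep A B C D dA dB dC dD tv 2%nat 0%nat 1%nat + ((-2)*A*A) * Ep A B C D dA dB dC dD tv 2%nat 0%nat 2%nat + (2*A) * Ep A B C D dA dB dC dD tv 2%nat 0%nat 3%nat + (2*A) * Ep A B C D dA dB dC dD tv 2%nat 1%nat 2%nat + ((-2)) * Ep A B C D dA dB dC dD tv 2%nat 1%nat 3%nat + ((-1)*A*D + 1*B*C) * Ep A B C D dA dB dC dD tv 3%nat 0%nat 1%nat + ((-1)*A*C + 1*D) * Ep A B C D dA dB dC dD tv 3%nat 0%nat 2%nat + (1*A*A + (-1)*B) * Ep A B C D dA dB dC dD tv 3%nat 0%nat 3%nat + (1*C) * Ep A B C D dA dB dC dD tv 3%nat 1%nat 2%nat + ((-1)*A) * Ep A B C D dA dB dC dD tv 3%nat 1%nat 3%nat + (1) * Ep A B C D dA dB dC dD tv 3%nat 2%nat 3%nat).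
    + unfold_all; field.
    + rewrite H001, H002, H101, H102, H103, H112, H201, H202, H203, H212, H213, H301, H302, H303, H312, H313, H323; ring.
Qed.

Lemma alg_bwd (A B C D : R) (dA dB dC dD : nat -> R) :
  cond1 A B C D dA dB dC dD = 0 -> cond2 A B C D dA dB dC dD = 0 -> cond3 A B C D dA dB dC dD = 0 -> cond4 A B C D dA dB dC dD = 0 ->
  forall a c d, (a < 4)%nat -> (c < d)%nat -> (d < 4)%nat ->
  Ep A B C D dA dB dC dD (fun k c => tf k c A B C D dA dB dC dD) a c d = 0.
Proof.
  intros H1 H2 H3 H4 a c d Ha Hcd Hd.
  destruct a as [|[|[|[|a]]]]; try lia; destruct c as [|[|[|[|c]]]]; try lia; destruct d as [|[|[|[|d]]]]; try lia.
  - transitivity (0).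
    + unfold_all; field.
    + rewrite ?H1, ?H2, ?H3, ?H4; ring.
  - transitivity (((-1/2)) * cond4 A B C D dA dB dC dD).
    + unfold_all; field.
    + rewrite ?H1, ?H2, ?H3, ?H4; ring.
  - transitivity ((1) * cond3 A B C D dA dB dC dD + ((-1/2)*A) * cond4 A B C D dA dB dC dD).
    + unfold_all; field.
    + rewrite ?H1, ?H2, ?H3, ?H4; ring.
  - transitivity (((-1/2)*A) * cond4 A B C D dA dB dC dD).
    + unfold_all; field.
    + rewrite ?H1, ?H2, ?H3, ?H4; ring.
  - transitivity (((1/2)) * cond2 A B C D dA dB dC dD + (1*A) * cond3 A B C D dA dB dC dD + ((-1/2)*A*A) * cond4 A B C D dA dB dC dD).
    + unfold_all; field.
    + rewrite ?H1, ?H2, ?H3, ?H4; ring.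
  - transitivity ((1) * cond1 A B C D dA dB dC dD + ((1/2)*A) * cond2 A B C D dA dB dC dD + (1*B) * cond3 A B C D dA dB dC dD + ((-1/2)*A*B + (1/2)*D) * cond4 A B C D dA dB dC dD).
    + unfold_all; field.
    + rewrite ?H1, ?H2, ?H3, ?H4; ring.
  - transitivity (0).
    + unfold_all; field.
    + rewrite ?H1, ?H2, ?H3, ?H4; ring.
  - transitivity (0).
    + unfold_all; field.
    + rewrite ?H1, ?H2, ?H3, ?H4; ring.
  - transitivity (0).
    + unfold_all; field.
    + rewrite ?H1, ?H2, ?H3, ?H4; ring.
  - transitivity (0).
    + unfold_all; field.
    + rewrite ?H1, ?H2, ?H3, ?H4; ring.
  - transitivity (0).
    + unfold_all; field.
    + rewrite ?H1, ?H2, ?H3, ?H4; ring.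
  - transitivity (0).
    + unfold_all; field.
    + rewrite ?H1, ?H2, ?H3, ?H4; ring.
  - transitivity (0).
    + unfold_all; field.
    + rewrite ?H1, ?H2, ?H3, ?H4; ring.
  - transitivity (0).
    + unfold_all; field.
    + rewrite ?H1, ?H2, ?H3, ?H4; ring.
  - transitivity (0).
    + unfold_all; field.
    + rewrite ?H1, ?H2, ?H3, ?H4; ring.
  - transitivity (0).
    + unfold_all; field.
    + rewrite ?H1, ?H2, ?H3, ?H4; ring.
  - transitivity (0).
    + unfold_all; field.
    + rewrite ?H1, ?H2, ?H3, ?H4; ring.
  - transitivity (0).
    + unfold_all; field.
    + rewrite ?H1, ?H2, ?H3, ?H4; ring.
  - transitivity (0).
    + unfold_all; field.
    + rewrite ?H1, ?H2, ?H3, ?H4; ring.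
  - transitivity (0).
    + unfold_all; field.
    + rewrite ?H1, ?H2, ?H3, ?H4; ring.
  - transitivity (0).
    + unfold_all; field.
    + rewrite ?H1, ?H2, ?H3, ?H4; ring.
  - transitivity (0).
    + unfold_all; field.
    + rewrite ?H1, ?H2, ?H3, ?H4; ring.
  - transitivity (0).
    + unfold_all; field.
    + rewrite ?H1, ?H2, ?H3, ?H4; ring.
  - transitivity (0).
    + unfold_all; field.
    + rewrite ?H1, ?H2, ?H3, ?H4; ring.
Qed.

Lemma pd_hmat A B C D c a d p : pd c (hmat A B C D a d) p =
  dhm (fun i => pd i A p) (fun i => pd i B p) (fun i => pd i C p) (fun i => pd i D p) c a d.
Proof.
  destruct a as [|[|[|[|a]]]]; destruct d as [|[|[|[|d]]]];
  cbv beta iota delta [hmat dhm]; first [reflexivity | apply pd_const].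
Qed.

Lemma plus_eq_opp x s : x + s = 0 -> x = - s.
Proof. intro; lra. Qed.

Ltac smooth_tac HU := repeat first [ apply smooth_const | apply smooth_add | apply smooth_sub
  | (apply smooth_pd; [exact HU | lia | assumption]) | apply smooth_mul | assumption ].

Theorem theorem3 (U : pt -> Prop) (A B C D : pt -> R) :
  is_open U ->
  smooth_on U A -> smooth_on U B -> smooth_on U C -> smooth_on U D ->
  (torsion_free U (hmat A B C D) <->
   forall p, U p ->
     let V j f := Vf A B C D j f p in
     V 2%nat D - V 3%nat B - A p * V 2%nat B - C p * V 2%nat A + A p * V 3%nat A
       + A p ^ 2 * V 2%nat A = 0 /\
     2 * V 1%nat D - V 2%nat C - 2 * A p * V 1%nat B - V 3%nat A + A p * V 2%nat A
       + 2 * A p ^ 2 * V 1%nat A - 2 * C p * V 1%nat A = 0 /\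
     V 0%nat D - 2 * V 1%nat C + 3 * V 1%nat B - A p * V 0%nat B - 2 * V 2%nat A
       - A p * V 1%nat A - C p * V 0%nat A + A p ^ 2 * V 0%nat A = 0 /\
     V 0%nat C - 2 * V 0%nat B + V 1%nat A + A p * V 0%nat A = 0).
Proof.
  intros HU HA HB HC HD. split.
  - intros [t [Hs Ht]] p Hp. cbv zeta in Ht.
    assert (Hall : forall a c d, (a < 4)%nat -> (c < d)%nat -> (d < 4)%nat ->
      Ep (A p) (B p) (C p) (D p) (fun i => pd i A p) (fun i => pd i B p)
         (fun i => pd i C p) (fun i => pd i D p) (fun k c => t k c p) a c d = 0).
    { intros a c d Ha Hcd Hd. pose proof (Ht p Hp a c d Ha Hcd Hd) as E.
      rewrite !pd_hmat in E. unfold Ep. cbv zeta. rewrite E. exact (Rplus_opp_l _). }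
    exact (alg_fwd _ _ _ _ _ _ _ _ _ Hall).
  - intros Hc.
    exists (fun k c p => tf k c (A p) (B p) (C p) (D p) (fun i => pd i A p) (fun i => pd i B p)
         (fun i => pd i C p) (fun i => pd i D p)).
    split.
    + intros k c Hk Hc'.
      destruct k as [|[|[|[|k]]]]; try lia; destruct c as [|[|[|[|c]]]]; try lia;
      cbv beta iota delta [tf]; smooth_tac HU.
    + cbv zeta. intros p Hp a c d Ha Hcd Hd. destruct (Hc p Hp) as [H1 [H2 [H3 H4]]].
      pose proof (alg_bwd (A p) (B p) (C p) (D p) (fun i => pd i A p) (fun i => pd i B p)
         (fun i => pd i C p) (fun i => pd i D p) H1 H2 H3 H4 a c d Ha Hcd Hd) as E.
      rewrite !pd_hmat. unfold Ep in E. cbv zeta in E. apply plus_eq_opp. exact E.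
Qed.
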